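(* Let $\phi:\{0,1\}^N\to\{0,1\}$ be a boolean function, regarded as a multi-valued logic gate with $k=N$, $T_i=\{0,1\}$, $w(i,0)=0$, $w(i,1)=1$ for all $i$, and output set $T=\{0,1\}\subset\mathbb{R}$ (so $N(\overline{\phi})=N$). Then $\mathrm{cs}(\overline{\phi})\le s(\phi)$.
   Context: Sensitivity: for $z\in\{0,1\}^N$, let $z^i$ be obtained from $z$ by changing its $i$-th coordinate; $s(\phi,z)$ is the number of indices $i$ with $\phi(z)\ne\phi(z^i)$, and $s(\phi)=\max_z s(\phi,z)$. Standard simplex: $\Delta^{m}=\{(t_0,\dots,t_m)\in\mathbb{R}^{m+1}: t_i\ge0,\ \sum_i t_i=1\}$; for $0\le j\le m$, $\Delta^m_j=\{(t_0,\dots,\widehat{t_j},\dots,t_m):(t_0,\dots,t_m)\in\Delta^m,\ t_j\neq0\}\subseteq\mathbb{R}^m$. Multi-valued logic gate: finite sets $T_i=\{w(i,0),\dots,w(i,n_i-1)\}$ ($i=1,\dots,k$), a finite set $T\subset\mathbb{R}^m$ and $\phi:T_1\times\cdots\times T_k\to T$. Fourier series expansion: $\overline{\phi}:\Delta^{n_1-1}\times\cdots\times\Delta^{n_k-1}\to\mathbb{R}^m$, $\overline{\phi}((t_{1,j})_j,\dots,(t_{k,j})_j)=\sum_{(j_1,\dots,j_k)}\big(\prod_{s=1}^k t_{s,j_s}\big)\phi(w(1,j_1),\dots,w(k,j_k))$. $N(\overline{\phi})=n_1+\cdots+n_k-k$. For $z=(w(1,j(z,1)),\dots,w(k,j(z,k)))$: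 $C(\overline{\phi},z)=\prod_{i=1}^k\Delta^{n_i-1}_{j(z,i)}\subseteq\mathbb{R}^{N(\overline\phi)}$, and $f_z:\mathbb{R}^{N(\overline\phi)}\to\mathbb{R}^m$ is the polynomial map in the variables $t_{i,j}$ ($j\ne j(z,i)$, ordered lexicographically) obtained from the multilinear formula for $\overline{\phi}$ by substituting $t_{i,j(z,i)}=1-\sum_{j\neq j(z,i)}t_{i,j}$. Signs: for $g:\mathbb{R}^n\to\mathbb{R}$ and nonempty $C$, $\mathrm{sign}_C(g)=+1,0,-1$ if $g>0$, $g=0$, $g<0$ on all of $C$ respectively, and $u$ (formal symbol) otherwise; $\mathrm{Sign}_C(g)=(\mathrm{sign}_C(\partial g/\partial x_1),\dots,\mathrm{sign}_C(\partial g/\partial x_n))$. $S_n$: nonzero tuples in $\{-1,0,1\}^n$ with first nonzero entry $1$. $t\in\{1,0,-1,u\}^n$ eliminates $s\in S_n$ if (i) $t_i\neq0\neq s_i$ for some $i$; (ii) there is $k\in\{\pm1\}$ with $t_i=ks_i$ whenever $s_i\ne0$, $t_i\ne0$; (iii) $s_i=0$ whenever $t_i=u$. $\mathrm{Elim}(X)$ = set of elements of $S_n$ eliminated by some element of $X$. $\mathrm{Sens}_C(f)$ = set of $v\in S_n$ eliminated by $\mathrm{Sign}_C(\pi\circ f)$ for some differentiable $\pi:\mathbb{R}^m\to\mathbb{R}$. Continuous sensitivity: with $N'=N(\overline\phi)$, $\mathrm{cs}(\overline{\phi},z)=\log_3\big(3^{N'}-2|\mathrm{Elim}(S_{N'}\setminus\mathrm{Sens}_{C(\overline{\phi},z)}(f_z))|\big)$,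 $\mathrm{cs}(\overline{\phi})=\max_z\mathrm{cs}(\overline{\phi},z)$. *)

(* Defs.v *)
From Stdlib Require Import Reals Classical ClassicalEpsilon.
From HB Require Import structures.
From mathcomp Require Import all_boot.

Set Implicit Arguments.
Unset Strict Implicit.
Unset Printing Implicit Defensive.

Definition bpt (N : nat) := {ffun 'I_N -> bool}.

Definition flip (N : nat) (z : bpt N) (i : 'I_N) : bpt N :=
  [ffun j => if j == i then ~~ z j else z j].

Definition sens_at (N : nat) (phi : bpt N -> bool) (z : bpt N) : nat :=
  #|[set i : 'I_N | phi z != phi (flip z i)]|.

Definition sensitivity (N : nat) (phi : bpt N -> bool) : nat :=
  \max_(z : bpt N) sens_at phi z.

(* A point of Delta^1 x ... x Delta^1 is t : 'I_N -> bool -> R, with    *)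
(* t i false = t_{i,0} and t i true = t_{i,1}.                          *)

Local Open Scope R_scope.

Definition out (b : bool) : R := if b then 1 else 0.

Definition fourier (N : nat) (phi : bpt N -> bool) (t : 'I_N -> bool -> R) : R :=
  \big[Rplus/0]_(y : bpt N) (\big[Rmult/1]_(i < N) t i (y i) * out (phi y)).

Definition simplex1 (t : bool -> R) : Prop :=
  (0 <= t false) /\ (0 <= t true) /\ (t false + t true = 1).

Definition Delta1_j (j : bool) (s : R) : Prop :=
  exists t : bool -> R, simplex1 t /\ t j <> 0 /\ s = t (~~ j).

(* Points of R^{N(phibar)} = R^N: the remaining variable for block i is
   t_{i, 1 - z_i}, so coordinate i of x stands for t_{i, ~~ z i}. *)
Definition rpt (N : nat) := 'I_N -> R.

Definition Cz (N : nat) (z : bpt N) (x : rpt N) : Prop :=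
  forall i : 'I_N, Delta1_j (z i) (x i).

Definition f_z (N : nat) (phi : bpt N -> bool) (z : bpt N) (x : rpt N) : R :=
  fourier phi (fun i j => if j == z i then (1 - x i) else x i).

Inductive sgn := SPos | SZero | SNeg | SU.
Inductive tern := TPos | TZero | TNeg.

Definition sgn_code (s : sgn) : 'I_4 :=
  match s with SPos => inord 0 | SZero => inord 1 | SNeg => inord 2 | SU => inord 3 end.
Definition sgn_decode (n : 'I_4) : sgn :=
  match val n with 0 => SPos | 1 => SZero | 2 => SNeg | _ => SU end.
Lemma sgn_codeK : cancel sgn_code sgn_decode.
Proof. by case; rewrite /sgn_decode /= inordK. Qed.
HB.instance Definition _ := Finite.copy sgn (can_type sgn_codeK).

Definition tern_code (s : tern) : 'I_3 :=
  match s with TPos => inord 0 | TZero => inord 1 | TNeg => inord 2 end.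
Definition tern_decode (n : 'I_3) : tern :=
  match val n with 0 => TPos | 1 => TZero | _ => TNeg end.
Lemma tern_codeK : cancel tern_code tern_decode.
Proof. by case; rewrite /tern_decode /= inordK. Qed.
HB.instance Definition _ := Finite.copy tern (can_type tern_codeK).

Definition tern_sgn (a : tern) : sgn :=
  match a with TPos => SPos | TZero => SZero | TNeg => SNeg end.
Definition tern_neg (a : tern) : tern :=
  match a with TPos => TNeg | TZero => TZero | TNeg => TPos end.

Definition tvec (N : nat) := {ffun 'I_N -> tern}.

Definition S_n (N : nat) : {set tvec N} :=
  [set s : tvec N | [exists i, s i != TZero] &&
     [forall i, ((s i != TZero) && [forall j : 'I_N, (j < i)%N ==> (s j == TZero)])
                  ==> (s i == TPos)]].

Definition eliminates (N : nat) (t : 'I_N -> sgn) (s : tvec N) : bool :=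
  [&& [exists i, (t i != SZero) && (s i != TZero)],
      [forall i, ((s i != TZero) && (t i != SZero)) ==> (t i == tern_sgn (s i))]
   || [forall i, ((s i != TZero) && (t i != SZero)) ==> (t i == tern_sgn (tern_neg (s i)))]
    & [forall i, (t i == SU) ==> (s i == TZero)]].

Definition Elim (N : nat) (X : {set tvec N}) : {set tvec N} :=
  [set s in S_n N | [exists x in X, eliminates (fun i => tern_sgn (x i)) s]].

Definition upd (N : nat) (x : rpt N) (i : 'I_N) (r : R) : rpt N :=
  fun j => if j == i then r else x j.

Definition pderiv_is (N : nat) (g : rpt N -> R) (i : 'I_N) (x : rpt N) (l : R) : Prop :=
  derivable_pt_lim (fun r => g (upd x i r)) (x i) l.

Definition pos_on (N : nat) (C : rpt N -> Prop) (g : rpt N -> R) (i : 'I_N) : Prop :=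
  forall x, C x -> exists l, pderiv_is g i x l /\ (0 < l).
Definition zero_on (N : nat) (C : rpt N -> Prop) (g : rpt N -> R) (i : 'I_N) : Prop :=
  forall x, C x -> exists l, pderiv_is g i x l /\ l = 0.
Definition neg_on (N : nat) (C : rpt N -> Prop) (g : rpt N -> R) (i : 'I_N) : Prop :=
  forall x, C x -> exists l, pderiv_is g i x l /\ (l < 0).

Definition sign_C (N : nat) (C : rpt N -> Prop) (g : rpt N -> R) (i : 'I_N) : sgn :=
  if excluded_middle_informative (pos_on C g i) then SPos
  else if excluded_middle_informative (zero_on C g i) then SZero
  else if excluded_middle_informative (neg_on C g i) then SNeg
  else SU.

Definition Sign_C (N : nat) (C : rpt N -> Prop) (g : rpt N -> R) : 'I_N -> sgn :=
  fun i => sign_C C g i.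

Definition bool_of_Prop (P : Prop) : bool :=
  if excluded_middle_informative P then true else false.

Definition Sens_C (N : nat) (C : rpt N -> Prop) (f : rpt N -> R) : {set tvec N} :=
  [set v in S_n N | bool_of_Prop
     (exists pi : R -> R, (forall r : R, exists l : R, derivable_pt_lim pi r l) /\
        eliminates (Sign_C C (fun x => pi (f x))) v)].

Definition log3 (x : R) : R := (ln x / ln 3).

Definition cs_at (N : nat) (phi : bpt N -> bool) (z : bpt N) : R :=
  log3 (3 ^ N - 2 * INR #|Elim (S_n N :\: Sens_C (Cz z) (f_z phi z))|).

(* cs(phibar) = max_z cs(phibar, z)  (the max over the nonempty set {0,1}^N) *)
Definition cs (N : nat) (phi : bpt N -> bool) : R :=
  \big[Rmax/cs_at phi [ffun => false]]_(z : bpt N) cs_at phi z.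

(* Main.v *)
Require Import Defs.
From Stdlib Require Import Reals Lra FunctionalExtensionality Classical ClassicalEpsilon.
From HB Require Import structures.
From mathcomp Require Import all_boot.
Lemma card_tern : #|{: tern}| = 3.
Proof.
have h : injective tern_code by exact: can_inj tern_codeK.
apply/eqP; rewrite eqn_leq; apply/andP; split.
  by have := leq_card _ h; rewrite card_ord.
have h2 : injective tern_decode.
  move=> a b H. apply: val_inj. move: H. rewrite /tern_decode.
  case: a => [[|[|[|?]]] ?] //; case: b => [[|[|[|?]]] ?] //.
by have := leq_card _ h2; rewrite card_ord.
Qed.
Lemma tPZ : TPos != TZero. Proof. by apply/eqP. Qed.
Lemma tNZ : TNeg != TZero. Proof. by apply/eqP. Qed.
Lemma sPZ : SPos != SZero. Proof. by apply/eqP. Qed.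
Lemma sPU : SPos != SU. Proof. by apply/eqP. Qed.
HB.instance Definition _ := Monoid.isComLaw.Build R (IZR 0) Rplus (fun a b c => esym (Rplus_assoc a b c)) Rplus_comm Rplus_0_l.
HB.instance Definition _ := Monoid.isComLaw.Build R (IZR 1) Rmult (fun a b c => esym (Rmult_assoc a b c)) Rmult_comm Rmult_1_l.

Section S2.
Local Open Scope R_scope.

Lemma flip_neq (N : nat) (z : bpt N) j : flip z j != z.
Proof. apply/eqP => /ffunP /(_ j); rewrite ffunE eqxx; by case: (z j). Qed.

Lemma f_z_const N (phi : bpt N -> bool) (z : bpt N) j r :
  phi z = phi (flip z j) -> f_z phi z (upd (fun _ => 0) j r) = out (phi z).
Proof.
move=> Hphi.
set t := (fun i b => if b == z i then 1 - upd (fun _ => 0) j r i else upd (fun _ => 0) j r i).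
have P1 : \big[Rmult/1]_(i < N) t i (z i) = 1 - r.
  rewrite (bigD1 j) //= big1; last first.
    by move=> i Hi; rewrite /t eqxx /upd (negbTE Hi); ring.
  by rewrite /t /upd !eqxx; ring.
have P2 : \big[Rmult/1]_(i < N) t i (flip z j i) = r.
  rewrite (bigD1 j) //= big1; last first.
    by move=> i Hi; rewrite /t ffunE (negbTE Hi) eqxx /upd (negbTE Hi); ring.
  rewrite /t ffunE /upd !eqxx.
  have -> : (~~ z j == z j) = false by case: (z j).
  ring.
have P3 : \big[Rplus/0]_(y | (y != z) && (y != flip z j))
            (\big[Rmult/1]_(i < N) t i (y i) * out (phi y)) = 0.
  apply: big1 => y; case/andP => Hy1 Hy2.
  have [i [Hij Hyi]] : exists i, i != j /\ y i != z i.
    have [i Hi] : exists i, y i != z i.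
      apply/existsP; move: Hy1; apply: contraR; rewrite negb_exists => /forallP H.
      by apply/eqP/ffunP => i; apply/eqP; move: (H i); rewrite negbK.
    have [k Hk] : exists k, y k != flip z j k.
      apply/existsP; move: Hy2; apply: contraR; rewrite negb_exists => /forallP H.
      by apply/eqP/ffunP => k; apply/eqP; move: (H k); rewrite negbK.
    move: Hk; rewrite ffunE; case: (eqVneq k j) => [->|Hkj] Hk; last by exists k.
    exists i; split => //; apply/eqP => Eij; move: Hi Hk; rewrite Eij.
    by case: (y j); case: (z j).
  rewrite (bigD1 i) //= /t (negbTE Hyi) /upd (negbTE Hij); ring.
rewrite /f_z /fourier -/t (bigD1 z) //= (bigD1 (flip z j)) /=; last by rewrite flip_neq.
rewrite P1 P2 P3 -Hphi; ring.
Qed.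

End S2.

Set Implicit Arguments.
Section S3.
Local Open Scope R_scope.

Lemma Cz0 N (z : bpt N) : Cz z (fun _ => 0).
Proof.
move=> i; exists (fun b => if b == z i then 1 else 0).
rewrite /simplex1 eqxx; case: (z i) => /=; split; try lra.
Qed.

Lemma deriv0 N (phi : bpt N -> bool) (z : bpt N) j (pi : R -> R) l :
  phi z = phi (flip z j) ->
  pderiv_is (fun x => pi (f_z phi z x)) j (fun _ => 0) l -> l = 0.
Proof.
move=> Hphi H.
have E : (fun r => pi (f_z phi z (upd (fun _ => 0) j r))) = (fun _ => pi (out (phi z))).
  by apply: functional_extensionality => r; rewrite f_z_const.
rewrite /pderiv_is E in H.
exact: (uniqueness_limite _ _ _ _ H (derivable_pt_lim_const _ _)).
Qed.

Lemma sign_not N (phi : bpt N -> bool) (z : bpt N) j (pi : R -> R) :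
  phi z = phi (flip z j) ->
  let s := sign_C (Cz z) (fun x => pi (f_z phi z x)) j in s <> SPos /\ s <> SNeg.
Proof.
move=> Hphi /=; rewrite /sign_C.
destruct (excluded_middle_informative _) as [Hp|Hq1].
  have [l [Hl1 Hl2]] := Hp _ (Cz0 z).
  have := @deriv0 _ phi z j pi l Hphi Hl1; lra.
destruct (excluded_middle_informative _) as [Hq2|Hq3]; first by [].
destruct (excluded_middle_informative _) as [Hn|Hq4]; last by [].
have [l [Hl1 Hl2]] := Hn _ (Cz0 z).
have := @deriv0 _ phi z j pi l Hphi Hl1; lra.
Qed.

End S3.

Definition ej N (j : 'I_N) : tvec N := [ffun i => if i == j then TPos else TZero].
Definition tneg N (v : tvec N) : tvec N := [ffun i => tern_neg (v i)].

Lemma ej_S N (j : 'I_N) : ej j \in S_n N.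
Proof.
rewrite inE; apply/andP; split.
  by apply/existsP; exists j; rewrite ffunE eqxx tPZ.
apply/forallP => i; apply/implyP; rewrite ffunE; case: (i == j) => //.
by case/andP; rewrite eqxx.
Qed.

Lemma ej_notSens N (phi : bpt N -> bool) (z : bpt N) j :
  phi z = phi (flip z j) -> ej j \notin Sens_C (Cz z) (f_z phi z).
Proof.
move=> Hphi; rewrite inE negb_and; apply/orP; right.
rewrite /bool_of_Prop; destruct (excluded_middle_informative _) as [[pi [Hd Hel]]|H] => //.
exfalso.
have [H1 H2] := @sign_not _ phi z j pi Hphi.
case/and3P: Hel => /existsP [i /andP [Hti Hei]] _ /forallP Hu.
move: Hei; rewrite ffunE; case: (eqVneq i j) => [Eij|_]; last by rewrite eqxx.
move=> _.
subst i.
move: (Hu j); rewrite ffunE eqxx /= => Hu'.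
move: Hti Hu' H1 H2; rewrite /Sign_C.
by case: (sign_C _ _ j) => //; rewrite ?eqxx ?(negbTE tPZ).
Qed.

Lemma elim_ej N (j : 'I_N) (w : tvec N) :
  w j != TZero -> eliminates (fun i => tern_sgn (ej j i)) w.
Proof.
move=> Hw; apply/and3P; split.
- by apply/existsP; exists j; rewrite ffunE eqxx Hw /= sPZ.
- move: Hw; case Ewj: (w j); rewrite ?eqxx // => _.
    apply/orP; left; apply/forallP => i; apply/implyP; rewrite ffunE.
    case: (eqVneq i j) => [->|_]; rewrite ?Ewj ?eqxx ?andbF //.
  apply/orP; right; apply/forallP => i; apply/implyP; rewrite ffunE.
  case: (eqVneq i j) => [->|_]; rewrite ?Ewj ?eqxx ?andbF //.
- by apply/forallP => i; rewrite ffunE; case: (i == j); apply/implyP => /eqP.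
Qed.

Lemma inE_lem N (phi : bpt N -> bool) (z : bpt N) j (w : tvec N) :
  phi z = phi (flip z j) -> w \in S_n N -> w j != TZero ->
  w \in Elim (S_n N :\: Sens_C (Cz z) (f_z phi z)).
Proof.
move=> Hphi HwS Hwj; rewrite inE HwS /=.
apply/existsP; exists (ej j); rewrite inE (@ej_notSens _ phi z j Hphi) ej_S /=.
exact: elim_ej.
Qed.

Lemma tneg_nz (a : tern) : (tern_neg a != TZero) = (a != TZero).
Proof. by case: a; rewrite /= ?eqxx ?tPZ ?tNZ. Qed.

Lemma tnegK N (v : tvec N) : tneg (tneg v) = v.
Proof. by apply/ffunP => i; rewrite !ffunE; case: (v i). Qed.

Lemma nonzero_S N (v : tvec N) i0 : v i0 != TZero -> v \in S_n N \/ tneg v \in S_n N.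
Proof.
move=> Hi0.
case: (@arg_minnP _ i0 (fun i => v i != TZero) (fun i : 'I_N => val i) Hi0) => m Hm Hmin.
have key : forall i : 'I_N, v i != TZero ->
    [forall j : 'I_N, (j < i)%N ==> (v j == TZero)] -> i = m.
  move=> i Hi /forallP Hall; apply: val_inj => /=.
  have Hmi := Hmin i Hi.
  case: (ltngtP m i) => [Hlt|Hlt|->] //.
    by move: (Hall m); rewrite Hlt /= (negbTE Hm).
  by move: Hmi; rewrite leqNgt Hlt.
move: Hm; case Evm: (v m); rewrite ?eqxx // => _; [left | right].
- rewrite inE; apply/andP; split; first by apply/existsP; exists m; rewrite Evm tPZ.
  apply/forallP => i; apply/implyP; case/andP => Hi Hall.
  by rewrite (key i Hi Hall) Evm.
- rewrite inE; apply/andP; split.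
    by apply/existsP; exists m; rewrite ffunE Evm /= tPZ.
  apply/forallP => i; apply/implyP; case/andP; rewrite ffunE tneg_nz => Hi Hall.
  have Hall' : [forall j : 'I_N, (j < i)%N ==> (v j == TZero)].
    apply/forallP => k; apply/implyP => Hk; move/forallP: Hall => /(_ k).
    by rewrite Hk ffunE /= => H; rewrite -[v k == _]negbK -tneg_nz H.
  by rewrite (key i Hi Hall') Evm.
Qed.

Lemma count_main N (phi : bpt N -> bool) (z : bpt N) :
  (3 ^ N <= 3 ^ sens_at phi z + 2 * #|Elim (S_n N :\: Sens_C (Cz z) (f_z phi z))|)%N.
Proof.
set A := [set i | phi z != phi (flip z i)].
set E := Elim _.
set G := [set v : tvec N | [forall j, (j \notin A) ==> (v j == TZero)]].
have cardT : #|{: tvec N}| = (3 ^ N)%N by rewrite card_ffun card_tern card_ord.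
have HG : (#|G| <= 3 ^ #|A|)%N.
  pose res (v : tvec N) : {ffun {x : 'I_N | x \in A} -> tern} := [ffun x => v (val x)].
  have := @leq_card_in _ _ res G.
  rewrite card_ffun card_tern card_sig.
  have -> : #|[pred x | x \in A]| = #|A| by apply: eq_card.
  apply=> v w; rewrite !inE => /forallP Hv /forallP Hw Hres.
  apply/ffunP => i; case: (boolP (i \in A)) => Hi.
    by move/ffunP: Hres => /(_ (exist _ i Hi)); rewrite !ffunE.
  by move: (Hv i) (Hw i); rewrite Hi /= => /eqP -> /eqP ->.
have HF : (#|~: G| <= 2 * #|E|)%N.
  have sub : ~: G \subset E :|: [set tneg v | v in E].
    apply/subsetP => v; rewrite in_setC in_set negb_forall in_setU => /existsP [j].
    rewrite negb_imply => /andP [HjA Hvj].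
    have Hphi : phi z = phi (flip z j) by apply/eqP; move: HjA; rewrite inE negbK.
    case: (@nonzero_S _ v j Hvj) => HS.
      by apply/orP; left; exact: (@inE_lem _ phi z j v Hphi HS Hvj).
    apply/orP; right; apply/imsetP; exists (tneg v); last by rewrite tnegK.
    by apply: (@inE_lem _ phi z j _ Hphi HS); rewrite ffunE tneg_nz.
  apply: (leq_trans (subset_leq_card sub)).
  apply: (leq_trans (leq_card_setU _ _)).
  by rewrite mul2n -addnn leq_add2l leq_imset_card.
have := cardsC G; rewrite cardT => <-.
rewrite /sens_at -/A.
by apply: leq_add.
Qed.

Local Open Scope R_scope.

Lemma INR_expn m n : INR (m ^ n)%N = INR m ^ n.
Proof. elim: n => [|n IH]; first by []. by rewrite expnS mult_INR IH. Qed.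

Lemma cs_at_le N (phi : bpt N -> bool) (z : bpt N) :
  cs_at phi z <= INR (sens_at phi z).
Proof.
have H := count_main phi z.
rewrite /cs_at /log3.
set e := #|Elim _|.
set a := sens_at phi z.
move/leP/le_INR: H; rewrite plus_INR mult_INR INR_expn INR_expn -/a -/e => H.
have E3 : INR 3 = 3 by simpl; lra.
have E2 : INR 2 = 2 by simpl; lra.
rewrite E3 E2 in H.
have l3 : 0 < ln 3 by rewrite -ln_1; apply: ln_increasing; lra.
have Ha := pos_INR a.
destruct (Rlt_dec 0 (3 ^ N - 2 * INR e)) as [Hp|Hn].
  have L : ln (3 ^ N - 2 * INR e) <= INR a * ln 3.
    rewrite -ln_pow; last lra.
    have [Hlt|Heq] : 3 ^ N - 2 * INR e < 3 ^ a \/ 3 ^ N - 2 * INR e = 3 ^ a by lra.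
      by left; apply: ln_increasing.
    by rewrite Heq; right.
  apply: (Rmult_le_reg_r (ln 3)) => //.
  unfold Rdiv; rewrite Rmult_assoc Rinv_l; last lra.
  lra.
have -> : ln (3 ^ N - 2 * INR e) = 0.
  by rewrite /ln; destruct (Rlt_dec 0 _) => //.
unfold Rdiv; rewrite Rmult_0_l; lra.
Qed.

Theorem mainTheorem9 (N : nat) (phi : {ffun 'I_N -> bool} -> bool) :
  cs phi <= INR (sensitivity phi).
Proof.
have Hz : forall z, cs_at phi z <= INR (sensitivity phi).
  move=> z; apply: Rle_trans (cs_at_le phi z) _.
  apply: le_INR; apply/leP.
  exact: (@leq_bigmax _ (fun z => sens_at phi z) z).
rewrite /cs; apply: (big_ind (fun x => x <= INR (sensitivity phi))) => //.
by move=> x y Hx Hy; apply: Rmax_lub.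
Qed.
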